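(* Let $d\ge1$, $D=\{1,\dots,d\}$, let $\Pi=(\Pi_{ij})_{i,j\in D}$ be a $d\times d$ stochastic matrix, and let $\mathcal{E}_H:\mathcal{M}_d\otimes\mathcal{M}_d\to\mathcal{M}_d$ be the linear extension of $\mathcal{E}_H(a\otimes b)=a\diamond P_H(b)$. Let $n\in\mathbb{N}$, $r\ge 0$ and $a_m=(a^{(m)}_{kl})_{k,l\in D}\in\mathcal{M}_d$ for $n\le m\le n+r$. Then $$\mathcal{E}_H\big(a_n\otimes\mathcal{E}_H(a_{n+1}\otimes\cdots\otimes\mathcal{E}_H(a_{n+r}\otimes \mathbf{1}_d)\cdots)\big)$$ $$=\sum_{\substack{k_n,\dots,k_{n+r}\in D\\ l_n,\dots,l_{n+r}\in D}}\Big(\prod_{m=n}^{n+r-1}\sqrt{\Pi_{k_mk_{m+1}}\Pi_{l_ml_{m+1}}}\,a^{(m)}_{k_ml_m}\Big)\Big(a^{(n+r)}_{k_{n+r}l_{n+r}}\sum_{j\in D}\sqrt{\Pi_{k_{n+r}j}\Pi_{l_{n+r}j}}\Big)e_{k_nl_n}.$$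
   Context: $\mathcal{M}_d$ is the algebra of complex $d\times d$ matrices with identity $\mathbf{1}_d$ and matrix units $e_{ij}$. A stochastic matrix has nonnegative entries and row sums $1$. $P_H:\mathcal{M}_d\to\mathcal{M}_d$ is defined by $P_H(A)=\sum_{i,j,k,l\in D}\sqrt{\Pi_{ik}\Pi_{jl}}\,a_{kl}\,e_{ij}$ for $A=(a_{kl})$, and $\diamond$ denotes the Schur (entrywise) product of matrices. *)

(* Defs.v *)
From HB Require Import structures.
From mathcomp Require Import all_boot all_order all_algebra.
From mathcomp Require Import complex.
Set Implicit Arguments. Unset Strict Implicit. Unset Printing Implicit Defensive.
Import Order.TTheory GRing.Theory Num.Theory.
Local Open Scope ring_scope.
Local Open Scope complex_scope.

Definition stochastic (R : rcfType) (d : nat) (Pi : 'M[R]_d) : Prop :=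
  (forall i j, 0 <= Pi i j) /\ (forall i, \sum_(j < d) Pi i j = 1).

Definition schur (C : pzRingType) (d : nat) (A B : 'M[C]_d) : 'M[C]_d :=
  \matrix_(i, j) (A i j * B i j).

Definition PH (R : rcfType) (d : nat) (Pi : 'M[R]_d) (A : 'M[R[i]]_d)
  : 'M[R[i]]_d :=
  \matrix_(i, j) \sum_(k < d) \sum_(l < d)
     (Num.sqrt (Pi i k * Pi j l))%:C * A k l.

(* E_H on elementary tensors: E_H(a (x) b) = a <> P_H(b);
   E_H is the linear extension of this bilinear map. *)
Definition EH (R : rcfType) (d : nat) (Pi : 'M[R]_d) (a b : 'M[R[i]]_d)
  : 'M[R[i]]_d := schur a (PH Pi b).

Definition nestedEH (R : rcfType) (d : nat) (Pi : 'M[R]_d)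
  (a : nat -> 'M[R[i]]_d) (n r : nat) : 'M[R[i]]_d :=
  foldr (fun m acc => EH Pi (a m) acc) 1%:M (iota n r.+1).

(* Main.v *)
Require Import Defs.
From HB Require Import structures.
From mathcomp Require Import all_boot all_order all_algebra.
From mathcomp Require Import complex.
Import Order.TTheory GRing.Theory Num.Theory.
Local Open Scope ring_scope.
Local Open Scope complex_scope.
Set Implicit Arguments. Unset Strict Implicit.

Definition fcons (d m : nat) (x : 'I_d) (K : {ffun 'I_m -> 'I_d}) : {ffun 'I_m.+1 -> 'I_d} :=
  [ffun p : 'I_m.+1 => if unlift ord0 p is Some q then K q else x].
Definition ftail (d m : nat) (k : {ffun 'I_m.+1 -> 'I_d}) : {ffun 'I_m -> 'I_d} :=
  [ffun q => k (lift ord0 q)].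

Lemma fcons0 d m (x : 'I_d) (K : {ffun 'I_m -> 'I_d}) : fcons x K ord0 = x.
Proof. by rewrite ffunE unlift_none. Qed.
Lemma fconsS d m (x : 'I_d) (K : {ffun 'I_m -> 'I_d}) q : fcons x K (lift ord0 q) = K q.
Proof. by rewrite ffunE liftK. Qed.

Lemma sum_ffun_cons (V : nmodType) d m (x : 'I_d) (F : {ffun 'I_m.+1 -> 'I_d} -> V) :
  \sum_(k : {ffun 'I_m.+1 -> 'I_d} | k ord0 == x) F k = \sum_(K : {ffun 'I_m -> 'I_d}) F (fcons x K).
Proof.
rewrite (reindex_onto (@fcons d m x) (@ftail d m)).
  apply: eq_bigl => K; rewrite fcons0 eqxx /=; apply/eqP/ffunP => q.
  by rewrite ffunE fconsS.
move=> k /eqP k0; apply/ffunP => p; rewrite ffunE.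
case: (unliftP ord0 p) => [q ->|->]; first by rewrite ffunE.
by rewrite k0.
Qed.

Definition W (R : rcfType) (d : nat) (Pi : 'M[R]_d) (a : nat -> 'M[R[i]]_d) (n r : nat)
  (k l : {ffun 'I_r.+1 -> 'I_d}) : R[i] :=
    ((\prod_(p < r)
        ((Num.sqrt (Pi (k (widen_ord (leqnSn r) p)) (k (lift ord0 p))
                  * Pi (l (widen_ord (leqnSn r) p)) (l (lift ord0 p))))%:C
         * a (n + p)%N (k (widen_ord (leqnSn r) p)) (l (widen_ord (leqnSn r) p))))
     * (a (n + r)%N (k ord_max) (l ord_max)
        * \sum_(j < d) (Num.sqrt (Pi (k ord_max) j * Pi (l ord_max) j))%:C)).

Arguments W {R d} Pi a n r k l.

Lemma W_cons (R : rcfType) (d : nat) (Pi : 'M[R]_d) a n r (x y : 'I_d) (K L : {ffun 'I_r.+1 -> 'I_d}) :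
  W Pi a n r.+1 (fcons x K) (fcons y L) =
  a n x y * ((Num.sqrt (Pi x (K ord0) * Pi y (L ord0)))%:C * W Pi a n.+1 r K L).
Proof.
rewrite /W big_ord_recl.
have w0 : widen_ord (leqnSn r.+1) ord0 = ord0 by apply: val_inj.
have wl : forall p : 'I_r, widen_ord (leqnSn r.+1) (lift ord0 p) = lift ord0 (widen_ord (leqnSn r) p)
  by move=> p; apply: val_inj.
have om : (ord_max : 'I_r.+2) = lift ord0 ord_max by apply: val_inj.
rewrite w0 !fcons0 !fconsS addn0 om !fconsS.
under eq_bigr => p _ do rewrite wl !fconsS /= addnS -addSn.
rewrite addnS -addSn.
by rewrite [X in X * _ * _]mulrC -!mulrA.
Qed.

Lemma entry (R : rcfType) (d : nat) (Pi : 'M[R]_d) a r : forall n (x y : 'I_d),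
  nestedEH Pi a n r x y =
  \sum_(k : {ffun 'I_r.+1 -> 'I_d} | k ord0 == x)
    \sum_(l : {ffun 'I_r.+1 -> 'I_d} | l ord0 == y) W Pi a n r k l.
Proof.
elim: r => [|r IH] n x y.
  rewrite sum_ffun_cons.
  have K0 : forall K : {ffun 'I_0 -> 'I_d}, K = [ffun q => x].
    by move=> K; apply/ffunP => -[].
  rewrite (big_pred1 [ffun q => x]); last by move=> K; rewrite /= (K0 K) eqxx.
  rewrite sum_ffun_cons (big_pred1 [ffun q => x]); last by move=> K; rewrite /= (K0 K) eqxx.
  rewrite /W big_ord0 mul1r addn0.
  have -> : (ord_max : 'I_1) = ord0 by apply: val_inj.
  rewrite !fcons0 /nestedEH /= /EH /schur /PH !mxE; congr (_ * _).
  apply: eq_bigr => k _.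
  rewrite (bigD1 k) //= big1 ?addr0; first by rewrite mxE eqxx mulr1.
  by move=> l /negPf kl; rewrite mxE eq_sym kl mulr0.
have -> : nestedEH Pi a n r.+1 = EH Pi (a n) (nestedEH Pi a n.+1 r) by [].
rewrite /EH /schur /PH !mxE.
rewrite sum_ffun_cons.
rewrite (eq_bigr _ (fun K _ => sum_ffun_cons y _)).
under eq_bigr => K _ do under eq_bigr => L _ do rewrite W_cons.
under eq_bigr => K _ do rewrite -big_distrr /=.
rewrite -big_distrr /=; congr (_ * _).
under eq_bigr => k _ do under eq_bigr => l _ do rewrite IH big_distrr /=.
rewrite (partition_big (fun K : {ffun 'I_r.+1 -> 'I_d} => K ord0) xpredT) //=.
apply: eq_bigr => k _; rewrite exchange_big /=.
apply: eq_big => // K /eqP Kk.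
rewrite (partition_big (fun L : {ffun 'I_r.+1 -> 'I_d} => L ord0) xpredT) //=.
apply: eq_bigr => l _; rewrite big_distrr /=.
by apply: eq_big => // L /eqP Ll; rewrite Kk Ll.
Qed.

Theorem mainTheorem2 (R : rcfType) (d : nat) (hd : (0 < d)%N)
  (Pi : 'M[R]_d) (hPi : stochastic Pi)
  (n r : nat) (a : nat -> 'M[R[i]]_d) :
  nestedEH Pi a n r =
  \sum_(k : {ffun 'I_r.+1 -> 'I_d}) \sum_(l : {ffun 'I_r.+1 -> 'I_d})
    ((\prod_(i < r)
        ((Num.sqrt (Pi (k (widen_ord (leqnSn r) i)) (k (lift ord0 i))
                  * Pi (l (widen_ord (leqnSn r) i)) (l (lift ord0 i))))%:C
         * a (n + i)%N (k (widen_ord (leqnSn r) i)) (l (widen_ord (leqnSn r) i))))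
     * (a (n + r)%N (k ord_max) (l ord_max)
        * \sum_(j < d) (Num.sqrt (Pi (k ord_max) j * Pi (l ord_max) j))%:C))
    *: delta_mx (k ord0) (l ord0).
Proof.
apply/matrixP => x y; rewrite entry summxE.
rewrite big_mkcond; apply: eq_bigr => k _; rewrite summxE.
rewrite big_mkcond /=; case: eqP => [<-|kx].
  apply: eq_bigr => l _; rewrite !mxE eqxx /=.
  by case: eqP => [<-|]; rewrite ?eqxx ?mulr1 // => ly; rewrite eq_sym (introF eqP ly) mulr0.
by rewrite big1 // => l _; rewrite !mxE eq_sym (introF eqP kx) /= mulr0.
Qed.
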